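(* Assume $|M|\ge 2$. Let $(T_{opt},B_{opt})$ be an optimal solution of an instance of MEMTCS and let $T_I$ be a minimum isotropic scattering tree for $M$. Then $\sum_{u\in nl(T_{opt})}|B_{opt}(u)|\ \ge\ \Xi(T_I)-|d^+(T_{opt})|+1$.
   Context: Let $G=(V,E)$ be a finite, simple, undirected, connected graph with $|V|\ge 2$. Fix a positive integer $K$ and, for every $u\in V$, a nonempty set $\Gamma(u)\subseteq\{1,\dots,K\}$. For a tree $T$, $N(T)$ is its vertex set, $nb_T(u)$ the neighbours of $u$ in $T$, and $d^+(T)$ the set of vertices of degree greater than one in $T$; if $T$ is rooted, $nl(T)$ is its set of non-leaf vertices and $child(u,T)$ the set of children of $u$. A hitting set of a collection $\mathcal C$ of subsets of a finite set $\mathcal F$ is a subset of $\mathcal F$ meeting every member of $\mathcal C$. For a tree $T$ in $G$ and $u\in d^+(T)$, let $\Upsilon(u,T)$ be a minimum-cardinality hitting set of $\{\Gamma(v): v\in nb_T(u)\}$, and let $\Xi(T)=\sum_{u\in d^+(T)}|\Upsilon(u,T)|$. A minimum isotropic scattering tree $T_I$ for $M$ is a tree in $G$ with $M\subseteq N(T_I)$ minimizing $\Xi$ among all such trees. An instance of MEMTCS consists of $G,K,\Gamma$, a terminal set $M\subseteq V$, a source $s\in M$, and reals $e_s\ge e_r\ge 0$. A multicast tree is a subtree $T$ of $G$ with $M\subseteq N(T)$, rooted at $s$. A feasible schedule for $T$ is a function $B: nl(T)\to 2^{\{1,\dots,K\}}$ such that each $B(u)$ is a hitting set of $\{\Gamma(v):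 v\in child(u,T)\}$. Its cost is $\Pi(T,B)=\sum_{u\in nl(T)}|B(u)|\,e_s+(|N(T)|-1)\,e_r$. An optimal solution $(T_{opt},B_{opt})$ minimizes $\Pi$ over all pairs of a multicast tree and a feasible schedule for it. *)

(* Defs.v *)
From HB Require Import structures.
From mathcomp Require Import all_boot all_order all_algebra.
Set Implicit Arguments. Unset Strict Implicit. Unset Printing Implicit Defensive.
Import Order.TTheory GRing.Theory Num.Theory.

Section Defs.
Variable V : finType.

Definition simple_graph (E : rel V) := symmetric E /\ irreflexive E.
Definition graph_connected (E : rel V) := forall u v : V, connect E u v.

(* A subgraph given by a vertex set N and a set F of (unordered) edges {u,v}. *)
Definition adjF (F : {set {set V}}) : rel V := fun u v => [set u; v] \in F.

Definition is_tree (E : rel V) (N : {set V}) (F : {set {set V}}) : Prop :=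
  [/\ (forall f, f \in F -> exists u v, [/\ f = [set u; v], u != v, E u v,
                                          u \in N & v \in N]),
      N != set0,
      (forall u v, u \in N -> v \in N -> connect (adjF F) u v)
    & #|F| = (#|N| - 1)%N].

Definition nbT (F : {set {set V}}) (u : V) : {set V} := [set v | adjF F u v].
Definition dplus (N : {set V}) (F : {set {set V}}) : {set V} :=
  [set u in N | 1 < #|nbT F u|]%N.

(* Rooted at s: v is a child of u iff {u,v} is an edge whose removal
   separates v from the root s. *)
Definition childT (s : V) (F : {set {set V}}) (u : V) : {set V} :=
  [set v | adjF F u v && ~~ connect (adjF (F :\ [set u; v])) s v].
Definition nlT (s : V) (N : {set V}) (F : {set {set V}}) : {set V} :=
  [set u in N | childT s F u != set0].

Variable K : nat.
Variable Gamma : V -> {set 'I_K}.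

Definition hits (B : {set 'I_K}) (S : {set V}) : bool :=
  [forall v in S, B :&: Gamma v != set0].

Definition min_hit (S : {set V}) : nat :=
  #| [arg min_(B < setT | hits B S) #|B| ] |.

Definition Xi (N : {set V}) (F : {set {set V}}) : nat :=
  (\sum_(u in dplus N F) min_hit (nbT F u))%N.

Definition feasible (s : V) (N : {set V}) (F : {set {set V}})
  (B : V -> {set 'I_K}) : Prop :=
  forall u, u \in nlT s N F -> hits (B u) (childT s F u).

Definition cost (R : realFieldType) (es er : R) (s : V) (N : {set V})
  (F : {set {set V}}) (B : V -> {set 'I_K}) : R :=
  ((\sum_(u in nlT s N F) #|B u|)%N)%:R * es + ((#|N| - 1)%N)%:R * er.

End Defs.

(* Main.v *)
Require Import Defs.
From HB Require Import structures.
From mathcomp Require Import all_boot all_order all_algebra.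
Import Order.TTheory GRing.Theory Num.Theory.
Set Implicit Arguments. Unset Strict Implicit.

Section G.
Variable V : finType.
Implicit Types (F : {set {set V}}) (N : {set V}).

Lemma adjF_sym F : symmetric (adjF F).
Proof. by move=> u v; rewrite /adjF setUC. Qed.

Lemma connect_symF F : connect_sym (adjF F).
Proof. exact/sym_connect_sym/adjF_sym. Qed.

Definition Pn F r x n := [exists t : n.-tuple V, path (adjF F) x t && (last x t == r)] || ~~ connect (adjF F) x r.

Lemma Pn_ex F r x : exists n, Pn F r x n.
Proof.
rewrite /Pn; case: (boolP (connect (adjF F) x r)) => [/connectP [p Hp ->]|_]; last by exists 0; rewrite orbT.
exists (size p); rewrite orbF; apply/existsP; exists (in_tuple p); by rewrite Hp eqxx.
Qed.

Definition dd F r x := ex_minn (Pn_ex F r x).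

Lemma dd_step F r x : x != r -> connect (adjF F) x r ->
  exists y, adjF F x y && (dd F r y < dd F r x).
Proof.
move=> xr cxr; rewrite /dd; case: ex_minnP => m Pm minm.
move: Pm; rewrite /Pn cxr orbF => /existsP [t /andP [Hp /eqP Hl]].
case: t Hp Hl => [[|y p] /= Hs] Hp Hl; first by rewrite Hl eqxx in xr.
case/andP: Hp => Hxy Hp.
exists y; rewrite Hxy /=.
case: ex_minnP => m' _ minm'.
have : Pn F r y (size p).
  rewrite /Pn; apply/orP; left; apply/existsP; exists (in_tuple p); by rewrite Hp Hl eqxx.
move/minm'. by move/eqP: Hs => <-.
Qed.

Lemma conn_card F N r : r \in N -> (forall x, x \in N -> connect (adjF F) x r) ->
  (#|N| <= #|F| + 1)%N.
Proof.
move=> rN Hc.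
pose g x := [set x; odflt x [pick y | adjF F x y && (dd F r y < dd F r x)]].
have Hg : forall x, x \in N :\ r -> (g x \in F) /\ (exists y, g x = [set x; y] /\ dd F r y < dd F r x).
  move=> x /setD1P [xr xN]; rewrite /g; case: pickP => [y /andP [Hy Hd]|H] /=.
    split; [exact Hy| by exists y].
  have [y /andP [Hy Hd]] := dd_step xr (Hc x xN).
  by move: (H y); rewrite Hy Hd.
have inj : {in N :\ r &, injective g}.
  move=> x x' /Hg [_ [y [-> Hy]]] /Hg [_ [y' [-> Hy']]] E.
  case: (eqVneq x x') => // nx.
  have : x \in [set x'; y'] by rewrite -E set21.
  rewrite in_set2 (negbTE nx) /= => /eqP xy'.
  have : x' \in [set x; y] by rewrite E set21.
  rewrite in_set2 eq_sym (negbTE nx) /= => /eqP x'y.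
  subst.
  by have := ltn_trans Hy Hy'; rewrite ltnn.
have : (#|g @: (N :\ r)| <= #|F|)%N.
  by apply subset_leq_card; apply/subsetP => e /imsetP [x Hx ->]; exact (Hg x Hx).1.
by rewrite card_in_imset // (cardsD1 r N) rN /= add1n addn1 ltnS.
Qed.

Lemma side F a b x : connect (adjF F) x a ->
  connect (adjF (F :\ [set a; b])) x a || connect (adjF (F :\ [set a; b])) x b.
Proof.
move=> /connectP [p Hp Hl]; elim: p x Hp Hl => [|z p IH] x /=.
  by move=> _ ->; rewrite connect0.
case/andP => Hxz Hp Hl.
have := IH z Hp Hl.
case: (eqVneq [set x; z] [set a; b]) => He.
  move=> _; have : x \in [set a; b] by rewrite -He set21.
  by rewrite in_set2 => /orP [] /eqP ->; rewrite connect0 ?orbT.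
have Hxz' : adjF (F :\ [set a; b]) x z by rewrite /adjF in_setD1 He.
by case/orP => H; apply/orP; [left|right]; apply: connect_trans (connect1 Hxz') H.
Qed.

Lemma edge_in E N F a b : is_tree E N F -> [set a; b] \in F ->
  [/\ a != b, a \in N & b \in N].
Proof.
case=> Hedges _ _ _ He.
have [u [v [Huv uv _ uN vN]]] := Hedges _ He.
have Ha : a \in [set u; v] by rewrite -Huv set21.
have Hb : b \in [set u; v] by rewrite -Huv set22.
split.
- apply/eqP => eab; subst b; move: Huv; rewrite setUid => Huv.
  have : u \in [set a] by rewrite Huv set21.
  have : v \in [set a] by rewrite Huv set22.
  by rewrite !in_set1 => /eqP ev /eqP eu; rewrite ev eu eqxx in uv.
- by move: Ha; rewrite in_set2 => /orP [] /eqP ->.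
- by move: Hb; rewrite in_set2 => /orP [] /eqP ->.
Qed.

Lemma tree_nc E N F a b : is_tree E N F -> [set a; b] \in F ->
  ~~ connect (adjF (F :\ [set a; b])) a b.
Proof.
move=> T He; have [ab aN bN] := edge_in T He.
case: T => Hedges Hne Hconn Hcard; apply/negP => Hab.
have Hall : forall x, x \in N -> connect (adjF (F :\ [set a; b])) x a.
  move=> x xN; case/orP: (@side F a b x (Hconn x a xN aN)) => // H.
  apply: connect_trans H _; by rewrite connect_symF.
have := conn_card aN Hall.
have := cardsD1 [set a; b] F; rewrite He Hcard => Hc H.
have : (#|N| - 1 <= #|F :\ [set a; b]|)%N by rewrite leq_subLR addnC.
by rewrite Hc add1n ltnn.
Qed.

Lemma path_avoid F (e1 e2 : {set V}) u x p : u \in e1 -> path (adjF (F :\ e2)) x p ->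
  ~~ connect (adjF (F :\ e2)) u (last x p) -> path (adjF (F :\ e1)) x p.
Proof.
move=> ue1; elim: p x => [|z p IH] x //= /andP [Hxz Hp] Hnc.
rewrite IH // andbT.
have xu : x != u.
  apply: contraNneq Hnc => <-; apply/connectP; exists (z :: p) => //=; by rewrite Hxz.
have zu : z != u.
  by apply: contraNneq Hnc => <-; apply/connectP; exists p.
move: Hxz; rewrite /adjF !in_setD1 => /andP [_ ->]; rewrite andbT.
apply/eqP => Heq; move: ue1; rewrite -Heq in_set2.
by rewrite eq_sym (negbTE xu) eq_sym (negbTE zu).
Qed.

Lemma nonchild F s u v :
  v \in nbT F u :\: childT s F u ->
  adjF F u v /\ connect (adjF (F :\ [set u; v])) s v.
Proof.
rewrite !inE => /andP [nc a]; rewrite a /= negbK in nc; by [].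
Qed.

Lemma nonchild_uniq E N F s u v1 v2 : is_tree E N F ->
  v1 \in nbT F u :\: childT s F u -> v2 \in nbT F u :\: childT s F u -> v1 = v2.
Proof.
move=> T /nonchild [a1 nc1] /nonchild [a2 nc2].
case: (eqVneq v1 v2) => // n12; exfalso.
have [u2 _ _] := edge_in T a2.
have [u1 _ _] := edge_in T a1.
have nc2' := tree_nc T a2.
have P : connect (adjF (F :\ [set u; v1])) s v2.
  move: nc2 => /connectP [p Hp Hl]; apply/connectP; exists p => //.
  apply: (@path_avoid F [set u; v1] [set u; v2] u) => //; first by rewrite set21.
  by rewrite -Hl.
have ne : [set u; v2] != [set u; v1].
  apply/eqP => Heq; have : v2 \in [set u; v1] by rewrite -Heq set22.
  by rewrite in_set2 eq_sym (negbTE u2) eq_sym (negbTE n12).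
have H12 : adjF (F :\ [set u; v1]) u v2 by rewrite /adjF in_setD1 ne; exact: a2.
have C : connect (adjF (F :\ [set u; v1])) u v1.
  apply: connect_trans (connect1 H12) _.
  apply: connect_trans _ nc1. by rewrite connect_symF.
by move: (tree_nc T a1); rewrite C.
Qed.

Lemma root_child E N F s v : is_tree E N F ->
  v \in nbT F s :\: childT s F s -> False.
Proof.
move=> T /nonchild [a nc].
by move: (tree_nc T a); rewrite nc.
Qed.

Lemma root_nb E N F s : is_tree E N F -> s \in N -> (2 <= #|N|)%N ->
  exists y, adjF F s y.
Proof.
case=> _ _ Hc _ sN N2.
have [x /andP [xs xN]] : exists x, (x != s) && (x \in N).
  apply/existsP; apply: contraTT N2 => /existsPn H.
  rewrite -ltnNge ltnS; apply/card_le1P => y yN z.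
  have Hy := H y; rewrite yN andbT negbK in Hy.
  apply/idP/eqP => [zN|->//].
  have Hz := H z; rewrite zN andbT negbK in Hz.
  by rewrite (eqP Hy) (eqP Hz).
have := Hc s x sN xN; case/connectP => [[|y p]] /=.
  by move=> _ xe; rewrite xe eqxx in xs.
by case/andP => H _ _; exists y.
Qed.

Lemma min_hit_le K (Gamma : V -> {set 'I_K}) S X : (forall u, Gamma u != set0) ->
  hits Gamma X S -> (min_hit Gamma S <= #|X|)%N.
Proof.
move=> HG HX; rewrite /min_hit; case: arg_minnP => [|B _ Hmin]; last by apply: Hmin.
by apply/forallP => v; apply/implyP => _; rewrite setTI.
Qed.
End G.

Lemma sum_sub (T : finType) (A B : {set T}) (f : T -> nat) : A \subset B ->
  (\sum_(i in A) f i <= \sum_(i in B) f i)%N.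
Proof. move=> AB; rewrite [X in (_ <= X)%N](big_setID A) /= (setIidPr AB); exact: leq_addr. Qed.

Unset Implicit Arguments.

Theorem lemma6 (R : realFieldType) (V : finType) (E : rel V)
  (K : nat) (Gamma : V -> {set 'I_K}) (M : {set V}) (s : V) (es er : R)
  (Nopt : {set V}) (Fopt : {set {set V}}) (Bopt : V -> {set 'I_K})
  (NI : {set V}) (FI : {set {set V}}) :
  simple_graph E -> graph_connected E -> (2 <= #|V|)%N ->
  (0 < K)%N -> (forall u, Gamma u != set0) ->
  s \in M -> (0 <= er)%R -> (er <= es)%R ->
  (2 <= #|M|)%N ->
  (* (Topt, Bopt) is an optimal solution of MEMTCS *)
  is_tree E Nopt Fopt -> M \subset Nopt -> feasible Gamma s Nopt Fopt Bopt ->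
  (forall N F B, is_tree E N F -> M \subset N -> feasible Gamma s N F B ->
     (cost es er s Nopt Fopt Bopt <= cost es er s N F B)%R) ->
  (* T_I is a minimum isotropic scattering tree for M *)
  is_tree E NI FI -> M \subset NI ->
  (forall N F, is_tree E N F -> M \subset N -> (Xi Gamma NI FI <= Xi Gamma N F)%N) ->
  ((\sum_(u in nlT s Nopt Fopt) #|Bopt u|)%N%:Z >=
     (Xi Gamma NI FI)%:Z - (#|dplus Nopt Fopt|)%:Z + 1)%R.
Proof.
move=> _ _ _ _ HG sM _ _ M2 T MN Hfeas _ _ _ Hmin.
have sN : s \in Nopt by apply: (subsetP MN).
have N2 : (2 <= #|Nopt|)%N by apply: leq_trans M2 (subset_leq_card MN).
set D := dplus Nopt Fopt; set L := nlT s Nopt Fopt.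
set h := fun u => min_hit Gamma (nbT Fopt u).
set b := fun u => #|Bopt u|.
have hb : forall u, u \in L -> (h u <= b u + (u != s))%N.
  move=> u uL; have Hu := Hfeas u uL.
  case: (pickP [pred w | w \in nbT Fopt u :\: childT s Fopt u]) => [w /= Hw|Hn].
    case: (eqVneq u s) => [us|us].
      by subst u; case: (root_child T Hw).
    have [c Hc] : exists c, c \in Gamma w by apply/set0Pn.
    apply: leq_trans (_ : #|c |: Bopt u| <= _)%N; last by rewrite cardsU1 addnC leq_add2l leq_b1.
    apply: min_hit_le => //; apply/forallP => v; apply/implyP => vn.
    case: (boolP (v \in childT s Fopt u)) => vc.
      move/forallP: Hu => /(_ v); rewrite vc /= => /set0Pn [x].
      by rewrite inE => /andP [H1 H2]; apply/set0Pn; exists x; rewrite !inE H1 H2 orbT.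
    have vw : v = w by apply: (nonchild_uniq T _ Hw); rewrite inE vc vn.
    by subst v; apply/set0Pn; exists c; rewrite !inE Hc eqxx.
  apply: leq_trans (leq_addr _ _); apply: min_hit_le => //.
  apply/forallP => v; apply/implyP => vn.
  case: (boolP (v \in childT s Fopt u)) => vc.
    by move/forallP: Hu => /(_ v); rewrite vc.
  by move: (Hn v); rewrite /= inE vc vn.
have DL : D \subset L.
  apply/subsetP => u; rewrite !inE => /andP [uN Hd]; rewrite uN /=.
  apply: contraTneq Hd => Hc; rewrite -leqNgt.
  apply/card_le1_eqP => x1 y1 x1n y1n.
  by apply: (@nonchild_uniq _ E Nopt Fopt s u _ _ T); rewrite in_setD Hc in_set0 ?x1n ?y1n.
have [y Hy] := root_nb T sN N2.
have yc : y \in childT s Fopt s.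
  case: (boolP (y \in childT s Fopt s)) => // yc.
  by case: (root_child (s:=s) T (_ : y \in nbT Fopt s :\: childT s Fopt s)); rewrite inE yc inE.
have sL : s \in L by rewrite inE sN /=; apply/set0Pn; exists y.
have bs : (0 < b s)%N.
  move/forallP: (Hfeas s sL) => /(_ y); rewrite yc /= => /set0Pn [c].
  by rewrite inE => /andP [H _]; rewrite /b card_gt0; apply/set0Pn; exists c.
have key : (Xi Gamma Nopt Fopt + 1 <= \sum_(u in L) b u + #|D|)%N.
  rewrite /Xi -/D (big_setD1 s sL) /=.
  case: (boolP (s \in D)) => sD.
    rewrite (big_setD1 s sD) /= (cardsD1 s D) sD.
    have := hb s sL; rewrite eqxx addn0 => hs.
    have : (\sum_(i in D :\ s) min_hit Gamma (nbT Fopt i) <= \sum_(i in D :\ s) (b i + 1))%N.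
      apply: leq_sum => i; rewrite in_setD1 => /andP [Hi iD].
      by have := hb i (subsetP DL i iD); rewrite Hi.
    rewrite big_split /= sum1_card => H2.
    have H3 : (\sum_(i in D :\ s) b i <= \sum_(i in L :\ s) b i)%N by apply: sum_sub; apply: setSD.
    rewrite addn1 add1n addnS ltnS -addnA; apply: leq_add hs _.
    by apply: leq_trans H2 _; rewrite leq_add2r.
  have : (\sum_(i in D) min_hit Gamma (nbT Fopt i) <= \sum_(i in D) (b i + 1))%N.
    apply: leq_sum => i iD; apply: leq_trans (hb i (subsetP DL i iD)) _.
    by rewrite leq_add2l leq_b1.
  rewrite big_split /= sum1_card => H2.
  have H3 : (\sum_(i in D) b i <= \sum_(i in L :\ s) b i)%N.
    apply: sum_sub; apply/subsetP => u uD; rewrite in_setD1 (subsetP DL u uD) andbT.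
    by apply: contraNneq sD => <-.
  rewrite -addnA [X in (_ <= X)%N]addnC; apply: leq_add bs.
  by apply: leq_trans H2 _; rewrite leq_add2r.
have := Hmin _ _ T MN.
move=> HX; have Hn : (Xi Gamma NI FI + 1 <= \sum_(u in L) b u + #|D|)%N.
  by apply: leq_trans key; rewrite leq_add2r.
rewrite addrAC lerBlDr -[1%R]/(Posz 1) -!PoszD lez_nat; exact: Hn.
Qed.
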